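(* Let $B_1,B_2$ be compact curves of genus at least two, let $g$ be the genus of $B_2$, and let $\mathcal A=(D_1\cup\dots\cup D_m,d,\{(t_i,r_i,n_i)\}_{i=1}^m)$ be a simple Galois admissible configuration for $B_1\times B_2$. If $m\le3(g-1)$, then $\nu(\mathcal A)\le2+\frac23$, with equality if and only if $m=3(g-1)$ and $r_i=3$ for all $i$.
   Context: A simple Galois admissible configuration for $B_1\times B_2$ consists of: pairwise disjoint curves $D_1,\dots,D_m\subset B_1\times B_2$, each the graph of an étale map $B_1\to B_2$; a positive integer $d$; and for each $i$ positive integers $t_i,n_i$ and $r_i\ge2$ with $d=t_in_ir_i$. Its abstract slope is $$\nu(\mathcal A)=2+\frac{-\sum_{i=1}^m t_in_i\frac{(r_i-1)(r_i+1)}{r_i}e(D_i)}{d\,e(B_1\times B_2)-\sum_{i=1}^m\beta_ie(D_i)},\qquad \beta_i=t_in_i(r_i-1),$$ where $e$ denotes topological Euler characteristic; equivalently $\nu(\mathcal A)=2+\dfrac{1-\frac1m\sum_i r_i^{-2}}{\frac{2g-2}{m}+1-\frac1m\sum_i r_i^{-1}}$. *)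

(* Defs.v *)
From mathcomp Require Import all_boot all_order all_algebra.
Set Implicit Arguments. Unset Strict Implicit. Unset Printing Implicit Defensive.
Import Order.TTheory GRing.Theory Num.Theory.
Local Open Scope ring_scope.

(* Abstract slope of a simple Galois admissible configuration, written exactly
   as the first formula of the paper, in terms of the numerical data
   m, d, (t_i, n_i, r_i) and the topological Euler characteristics
   eX = e(B1 x B2) and eD i = e(D_i).
   beta_i = t_i n_i (r_i - 1) (natural subtraction; r_i >= 2 in use). *)
Definition beta (m : nat) (t n r : 'I_m -> nat) (i : 'I_m) : nat :=
  (t i * n i * (r i - 1))%N.

Definition abstract_slope (R : realFieldType) (m d : nat) (t n r : 'I_m -> nat)
    (eX : int) (eD : 'I_m -> int) : R :=
  2 + (- \sum_(i < m) (t i * n i)%:R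
            * ((((r i)%:R - 1) * ((r i)%:R + 1)) / (r i)%:R) * (eD i)%:~R)
      / (d%:R * eX%:~R - \sum_(i < m) (beta t n r i)%:R * (eD i)%:~R).

(* Main.v *)
Require Import Defs.
From mathcomp Require Import all_boot all_order all_algebra.
From mathcomp Require Import ring lra zify.
Import Order.TTheory GRing.Theory Num.Theory.
Local Open Scope ring_scope.

Theorem proposition5p6 (R : realFieldType)
  (g1 g : nat)              (* genera of B1 and B2 *)
  (eB1 eB2 : int)           (* Euler characteristics of B1 and B2 *)
  (m d : nat) (t n r : 'I_m -> nat)
  (eD : 'I_m -> int)        (* Euler characteristics of the curves D_i *)
  (deg : 'I_m -> nat)       (* degrees of the etale maps B1 -> B2 with graph D_i *)
  : (2 <= g1)%N -> (2 <= g)%N ->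
    eB1 = 2 - 2 * (g1 : int) -> eB2 = 2 - 2 * (g : int) ->
    (* D_i is the graph of a map B1 -> B2, hence isomorphic to B1 *)
    (forall i, eD i = eB1) ->
    (* the map is etale of degree deg i (Riemann--Hurwitz) *)
    (forall i, (0 < deg i)%N /\ eB1 = (deg i : int) * eB2) ->
    (forall i, [/\ (0 < t i)%N, (0 < n i)%N, (2 <= r i)%N & d = (t i * n i * r i)%N]) ->
    (m <= 3 * (g - 1))%N ->
    let nu := abstract_slope R d t n r (eB1 * eB2) eD in
    nu <= 2 + 2 / 3 /\
    (nu = 2 + 2 / 3 <-> m = (3 * (g - 1))%N /\ (forall i, r i = 3%N)).
Proof.
move=> hg1 hg hB1 hB2 heD _ hdat hm nu; clear deg.
have hmR : (m%:R : R) <= 3 * g%:R - 3.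
  have : (m%:R : R) <= (3 * (g-1))%:R by rewrite ler_nat.
  rewrite natrM natrB //; last by lia. lra.
have hgR : (2 : R) <= g%:R by rewrite (ler_nat R 2 g).
have hg1R : (2 : R) <= g1%:R by rewrite (ler_nat R 2 g1).
have hE : (eB1%:~R : R) = 2 - 2 * g1%:R by rewrite hB1 rmorphB rmorphM /=.
have hE2 : (eB2%:~R : R) = 2 - 2 * g%:R by rewrite hB2 rmorphB rmorphM /=.
rewrite /nu /abstract_slope /beta; clear nu.
under eq_bigr => i _ do rewrite heD.
under [X in _ - X]eq_bigr => i _ do rewrite heD.
rewrite rmorphM /= hE hE2.
set E := 2 - 2 * (g1%:R : R).
set G := 2 * (g%:R : R) - 2.
have hEn : E < 0 by rewrite /E; lra.
have hG : 0 < G by rewrite /G; lra.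
case: m t n r eD heD hdat hm hmR => [|m] t n r eD heD hdat hm hmR.
  rewrite !big_ord0 oppr0 mul0r addr0.
  split; first lra.
  split; first by move=> h; exfalso; move: h; clear; lra.
  by case; lia.
set a := fun i : 'I_m.+1 => ((t i * n i)%:R : R).
set rho := fun i : 'I_m.+1 => ((r i)%:R : R).
set s := fun i => a i * (rho i - 3) ^+ 2 / (3 * rho i).
have hd : (0 < d)%N by case: (hdat ord0) => h1 h2 h3 ->; rewrite !muln_gt0 h1 h2; lia.
have hdR : (0 : R) < d%:R by rewrite ltr0n.
have ha : forall i, 0 < a i by move=> i; case: (hdat i) => *; rewrite ltr0n muln_gt0; apply/andP.
have hrho : forall i, 2 <= rho i by move=> i; case: (hdat i) => *; rewrite (ler_nat R 2).
have hda : forall i, (d%:R : R) = a i * rho i by move=> i; case: (hdat i) => _ _ _ ->; rewrite natrM.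
have hs : forall i, 0 <= s i.
  move=> i; rewrite /s; apply: divr_ge0; last by have := hrho i; lra.
  by apply: mulr_ge0; [exact: ltW | exact: sqr_ge0].
have hb : forall i, ((t i * n i * (r i - 1))%:R : R) = a i * (rho i - 1).
  move=> i; case: (hdat i) => _ _ h2 _; rewrite natrM natrB //; last by lia.
set Sc := \sum_(i < m.+1) _.
set Sb := \sum_(i < m.+1) _.
set Ss := \sum_(i < m.+1) s i.
have hrho0 : forall i, rho i != 0 by move=> i; have := hrho i; lra.
have key : 3 * Sc = 2 * Sb + E * (4/3 * d%:R * m.+1%:R - Ss).
  have hsum : \sum_(i < m.+1) (3 * ((t i * n i)%:R * (((r i)%:R - 1) * ((r i)%:R + 1) / (r i)%:R) * E)
       - 2 * ((t i * n i * (r i - 1))%:R * E) + E * s i) = \sum_(i < m.+1) (E * (4/3 * d%:R)).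
    apply: eq_bigr => i _; rewrite hb /s (hda i) -/(a i) -/(rho i).
    by field; have := hrho i; lra.
  rewrite big_split sumrB -!mulr_sumr sumr_const card_ord -/Sc -/Sb -/Ss in hsum.
  have h3 : 3 * Sc - 2 * Sb + E * Ss = E * (4/3 * (d%:R *+ m.+1)) := hsum.
  have -> : 3 * Sc = (3 * Sc - 2 * Sb + E * Ss) + 2 * Sb - E * Ss by ring.
  by rewrite h3 -mulr_natr; ring.
have hSb : Sb <= 0.
  apply: sumr_le0 => i _; apply: mulr_ge0_le0; [exact: ler0n | exact: ltW].
set D := d%:R * (E * (2 - 2 * g%:R)) - Sb.
have hD : 0 < D.
  have : 0 < d%:R * (- E) * G by apply: mulr_gt0; [apply: mulr_gt0 => //; lra | done].
  rewrite /D /G => h; move: h hSb; clear; nra.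
set x := - Sc / D.
have hx : x * D = - Sc by rewrite /x divfK // gt_eqF.
set P := (d%:R : R) * (4 * g%:R - 4 - 4/3 * m.+1%:R).
have hP : 0 <= P by apply: mulr_ge0; [exact: ltW | lra].
have hSs : 0 <= Ss by apply: sumr_ge0 => i _; exact: hs.
have hK : D * (2 - 3 * x) = (- E) * (P + Ss).
  have -> : D * (2 - 3 * x) = 2 * D - 3 * (x * D) by ring.
  rewrite hx (_ : 2 * D - 3 * - Sc = 2 * D + 3 * Sc); last by ring.
  rewrite key /D /P; ring.
have hnE : 0 < - E by lra.
split.
  have h0 : 0 <= D * (2 - 3 * x) by rewrite hK; apply: mulr_ge0; [exact: ltW | exact: addr_ge0].
  rewrite pmulr_rge0 // in h0; lra.
have step : (2 + x = 2 + 2/3) <-> (P + Ss = 0).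
  split => [h | h].
    have : D * (2 - 3 * x) = 0 by rewrite (_ : x = 2/3); [field | move: h; clear; lra].
    by rewrite hK => /eqP; rewrite mulf_eq0 gt_eqF //= => /eqP.
  move: hK; rewrite h mulr0 => /eqP; rewrite mulf_eq0 gt_eqF //= => /eqP h1.
  move: h1; clear; lra.
rewrite step; split.
  move=> /eqP; rewrite paddr_eq0 // => /andP [/eqP hP0 /eqP hS0].
  split.
    move: hP0 => /eqP; rewrite /P mulf_eq0 gt_eqF //= => /eqP h1.
    apply/eqP; rewrite -(eqr_nat R) natrM natrB; last by lia.
    by apply/eqP; move: h1; clear; lra.
  move=> i; have := @psumr_eq0P _ _ xpredT s (fun j _ => hs j) hS0 i isT.
  rewrite /s => /eqP; rewrite !mulf_eq0 invr_eq0 mulf_eq0 (negbTE (hrho0 i)) (gt_eqF (ha i)) pnatr_eq0 /= !orbF orbb => /eqP h.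
  by apply/eqP; rewrite -(eqr_nat R); apply/eqP; rewrite -/(rho i); lra.
move=> [hm3 hr3].
have -> : P = 0.
  rewrite /P hm3 natrM natrB; last by lia.
  by field.
have -> : Ss = 0.
  by apply: big1 => i _; rewrite /s /rho hr3 subrr expr0n /= mulr0 mul0r.
by rewrite addr0.
Qed.
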